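(* Let $G=(V,E)$ be a finite, undirected, unweighted, 2-vertex-connected graph with $n=|V|$ vertices. If $G$ contains a Hamiltonian path, then $G$ has a TSP tour of length at most $4n/3$.
   Context: A Hamiltonian path is a path in $G$ visiting every vertex exactly once. A TSP tour of $G$ is a closed walk in $G$ that visits every vertex at least once; its length is the number of edges traversed, counted with multiplicity. *)

(* Defs.v *)
(* A finite simple graph is a symmetric irreflexive
   relation e on a finType T (vertex set V = T, n = #|T|). *)
From mathcomp Require Import all_boot.
Set Implicit Arguments. Unset Strict Implicit. Unset Printing Implicit Defensive.

Section Graph.
Variables (T : finType) (e : rel T).

Definition simple_graph : Prop := symmetric e /\ irreflexive e.

Definition connected_graph : Prop := forall x y : T, connect e x y.

Definition del_vertex (v : T) : rel T := fun a b => [&& e a b, a != v & b != v].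

Definition two_vertex_connected : Prop :=
  2 < #|T| /\ connected_graph /\
  forall v x y : T, x != v -> y != v -> connect (del_vertex v) x y.

Definition hamiltonian_path (s : seq T) : Prop :=
  [/\ sorted e s, uniq s & forall v : T, v \in s].

(* TSP tour: closed walk x :: p (consecutive vertices adjacent, ending at x)
   visiting every vertex at least once; its length is size p, the number
   of traversed edges counted with multiplicity. *)
Definition tsp_tour (x : T) (p : seq T) : Prop :=
  [/\ path e x p, last x p = x & forall v : T, v \in x :: p].

Definition tour_length (x : T) (p : seq T) : nat := size p.

End Graph.

(* Main.v *)
Require Import Defs.
From mathcomp Require Import all_boot.
From mathcomp Require Import zify.
Set Implicit Arguments. Unset Strict Implicit. Unset Printing Implicit Defensive.

Fixpoint upk (x k : nat) : seq nat :=
  match k with 0 => [::] | k'.+1 => x.+1 :: upk x.+1 k' end.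
Fixpoint downk (y k : nat) : seq nat :=
  match k with 0 => [::] | k'.+1 => y.-1 :: downk y.-1 k' end.
Definition up x y := upk x (y - x).
Definition down y x := downk y (y - x).
Definition det_def b a := down b a.+1 ++ up a.+1 b.
Fact det_key : unit. Proof. exact tt. Qed.
Definition det := locked_with det_key det_def.
Lemma detE b a : det b a = down b a.+1 ++ up a.+1 b.
Proof. by rewrite /det unlock. Qed.

Lemma size_upk x k : size (upk x k) = k.
Proof. by elim: k x => //= k IH x; rewrite IH. Qed.
Lemma size_downk y k : size (downk y k) = k.
Proof. by elim: k y => //= k IH y; rewrite IH. Qed.
Lemma size_up x y : size (up x y) = y - x. Proof. exact: size_upk. Qed.
Lemma size_down y x : size (down y x) = y - x. Proof. exact: size_downk. Qed.
Lemma size_det b a : size (det b a) = 2 * (b - a.+1).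
Proof. rewrite detE size_cat size_up size_down; lia. Qed.

Lemma mem_upk x k i : x < i <= x + k -> i \in upk x k.
Proof.
elim: k x => [|k IH] x /andP[h1 h2]; first by lia.
rewrite inE; case: (eqVneq i x.+1) => //= hne.
apply: IH; apply/andP; split; lia.
Qed.
Lemma mem_up x y i : x < i <= y -> i \in up x y.
Proof. move=> /andP[h1 h2]; apply: mem_upk; apply/andP; split; lia. Qed.
Lemma mem_downk y k i : y - k <= i < y -> i \in downk y k.
Proof.
elim: k y => [|k IH] y /andP[h1 h2]; first by lia.
rewrite inE; case: (eqVneq i y.-1) => //= hne.
apply: IH; apply/andP; split; lia.
Qed.
Lemma mem_down y x i : x <= i < y -> i \in down y x.
Proof. move=> /andP[h1 h2]; apply: mem_downk; apply/andP; split; lia. Qed.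
Lemma mem_det b a i : a < i < b -> i \in det b a.
Proof. move=> /andP[h1 h2]; rewrite detE mem_cat mem_down //; apply/andP; split; lia. Qed.

Section Walks.
Variables (N : nat) (A : rel nat).
Hypothesis Asym : symmetric A.
Hypothesis Aup : forall i, i < N -> A i i.+1.

Lemma upk_path x k : x + k <= N -> path A x (upk x k) /\ last x (upk x k) = x + k.
Proof.
elim: k x => [|k IH] x h /=; first by rewrite addn0.
have [h1 h2] := IH x.+1 (ltac:(lia)).
rewrite Aup; last by lia.
by split => //; rewrite h2 addnS.
Qed.
Lemma up_path x y : x <= y <= N -> path A x (up x y) /\ last x (up x y) = y.
Proof.
move=> /andP[h1 h2]; have [] := @upk_path x (y - x) ltac:(lia).
by rewrite /up => -> ->; split => //; lia.
Qed.
Lemma downk_path y k : k <= y <= N -> path A y (downk y k) /\ last y (downk y k) = y - k.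
Proof.
elim: k y => [|k IH] y /andP[h1 h2] /=; first by rewrite subn0.
have [h3 h4] := IH y.-1 (ltac:(apply/andP; split; lia)).
rewrite h3 h4 andbT; split; last lia.
rewrite Asym; move: h1 h2; case: y {h3 h4 IH} => //= y' _ h2; apply: Aup; lia. Qed.
Lemma down_path y x : x <= y <= N -> path A y (down y x) /\ last y (down y x) = x.
Proof.
move=> /andP[h1 h2]; have [] := @downk_path y (y - x) ltac:(apply/andP; split; lia).
by rewrite /down => -> ->; split => //; lia.
Qed.
Lemma det_path b a : a < b <= N -> path A b (det b a) /\ last b (det b a) = b.
Proof.
move=> /andP[h1 h2].
have [p1 l1] := @down_path b a.+1 ltac:(apply/andP; split; lia).
have [p2 l2] := @up_path a.+1 b ltac:(apply/andP; split; lia).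
by rewrite detE cat_path last_cat l1 p1 p2 l2.
Qed.



Fixpoint W (u : bool) (x : nat) (c : seq (nat * nat)) : seq nat :=
  match c with
  | [::] => up x N
  | (a, b) :: c' => if u then up x a ++ b :: W false b c' else W true x c'
  end.

Fixpoint sw (u : bool) (c : seq (nat * nat)) : nat :=
  match c with
  | [::] => 0
  | (a, b) :: c' => (if u then b - a.+1 else 0) + sw (~~ u) c'
  end.

Fixpoint sig (c : seq (nat * nat)) : nat :=
  match c with [::] => 0 | (a, b) :: c' => b - a.+1 + sig c' end.

Definition inv (u : bool) (x : nat) (c : seq (nat * nat)) : Prop :=
  match c with
  | [::] => x <= N
  | (a, _) :: c' => if u then x <= a else
      match c' with [::] => x <= N | (a2, _) :: _ => x <= a2 end
  end.

Fixpoint good (c : seq (nat * nat)) : Prop :=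
  match c with
  | [::] => False
  | (a1, b1) :: c' => [/\ A a1 b1, a1 < b1 &
     match c' with
     | [::] => b1 = N
     | (a2, b2) :: c'' => [/\ a1 < a2, a2 < b1, b1 < b2,
           match c'' with [::] => True | (a3, _) :: _ => b1 <= a3 end & good c']
     end]
  end.

Lemma good_bN a b c : good ((a, b) :: c) -> a < b <= N.
Proof.
elim: c a b => [|[a2 b2] c IH] a b /= [h1 h2 h3].
  by rewrite h2 h3 leqnn.
case: h3 => h4 h5 h6 _ h8; have := IH _ _ h8; lia.
Qed.

Lemma sw_sig c : sw true c + sw false c = sig c.
Proof. by elim: c => //= [[a b] c] /= IH; rewrite add0n -IH; lia. Qed.

Lemma W_ok u x c : (c = [::] \/ good c) -> inv u x c ->
  [/\ path A x (W u x c), last x (W u x c) = N & size (W u x c) + sw u c + x = N].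
Proof.
elim: c u x => [|[a b] c IH] u x hg hi /=.
  have [p l] := @up_path x N ltac:(rewrite hi leqnn //).
  by rewrite p l size_up; split => //; rewrite /= in hi; lia.
case: hg => [//|hg].
have /andP[hab hbN] := good_bN hg.
case: u hi => /= hi.
  move: hg => /= [hA _ hrest].
  have hc : c = [::] \/ good c.
    by case: c hrest {IH} => [|[a2 b2] c'] /=; [left | move=> [] _ _ _ _ ?; right].
  have hi' : inv false b c.
    case: c hrest {IH hc} => [|[a2 b2] [|[a3 b3] c']] /=; try lia.
    by move=> [].
  have [p1 l1 s1] := IH false b hc hi'.
  have [p2 l2] := @up_path x a ltac:(apply/andP; split; lia).
  rewrite cat_path p2 l2 /= hA p1 last_cat l2 /= l1 size_cat size_up /=.
  split => //; lia.
move: hg => /= [hA _ hrest].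
have hc : c = [::] \/ good c.
  by case: c hrest {IH hi} => [|[a2 b2] c'] /=; [left | move=> [] _ _ _ _ ?; right].
have hi' : inv true x c by case: c hrest {IH hc} hi => [|[a2 b2] c'].
have [p1 l1 s1] := IH true x hc hi'.
by rewrite p1 l1 add0n; split.
Qed.


Lemma seq_ind2 (T : Type) (P : seq T -> Prop) : P [::] -> (forall x, P [:: x]) ->
  (forall x y c, P c -> P (x :: y :: c)) -> forall c, P c.
Proof.
move=> h0 h1 h2 c; suff: P c /\ forall x, P (x :: c) by case.
elim: c => [|x c [IH1 IH2]]; first by split.
by split => // y; apply: h2.
Qed.

Definition endR (c : seq (nat * nat)) : nat :=
  match c with
  | (a1, b1) :: (a2, b2) :: _ => a2
  | [:: (a1, b1)] => b1
  | [::] => 0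
  end.

Fixpoint R (c : seq (nat * nat)) : seq nat :=
  match c with
  | (a1, b1) :: (a2, b2) :: c'' =>
      b1 :: det b1 a2 ++
      (match c'' with
       | [::] => up b1 b2
       | (a3, _) :: _ => up b1 a3 ++ R c'' ++ down (endR c'') b2 ++ det b2 a3
       end) ++ [:: a2]
  | [:: (a1, b1)] => [:: b1]
  | [::] => [::]
  end.

Lemma R_cons2 a1 b1 a2 b2 :
  R [:: (a1, b1); (a2, b2)] = b1 :: det b1 a2 ++ up b1 b2 ++ [:: a2].
Proof. by []. Qed.
Lemma R_cons3 a1 b1 a2 b2 a3 b3 c :
  R ((a1, b1) :: (a2, b2) :: (a3, b3) :: c) = b1 :: det b1 a2 ++
    (up b1 a3 ++ R ((a3, b3) :: c) ++ down (endR ((a3, b3) :: c)) b2 ++ det b2 a3)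
    ++ [:: a2].
Proof. by []. Qed.

Lemma R_ok c : forall a b c', c = (a, b) :: c' -> good c ->
  [/\ path A a (R c), last a (R c) = endR c, size (R c) + endR c = sig c + a + 2,
      endR c <= N &
      forall i, a <= i <= N -> (i <= a) || (endR c <= i) -> i \in a :: R c].
Proof.
elim/seq_ind2: c => [|[a1 b1]|[a1 b1] [a2 b2] c IH] a b c' E //; case: E => Ha Hb Hc; subst a b c'.
  move=> /= [hA hab hN]; subst; rewrite /= hA; split => //; try lia.
  move=> i /andP[h1 h2] /orP[h|h]; rewrite !inE; apply/orP; [left|right]; apply/eqP; lia.
move=> hg; have hg' := hg; move: hg' => /= [hA1 hab1 [h12 h21 hb12 hc hg2]].
have /andP[_ hb2N] := good_bN hg2.
case: c IH hc hg2 hg => [|[a3 b3] c] IH hc hg2 hg.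
  move: hg2 => /= [hA2 hab2 hb2]; subst b2.
  have [p1 l1] := @det_path b1 a2 ltac:(apply/andP; split; lia).
  have [p2 l2] := @up_path b1 N ltac:(apply/andP; split; lia).
  rewrite hA1 cat_path p1 l1 cat_path p2 l2 /= Asym hA2 last_cat l1 last_cat l2 /=.
  rewrite size_cat size_det size_cat size_up /=.
  split => //; try lia.
  move=> i /andP[h1 h2] /orP[h|h].
    by rewrite inE; apply/orP; left; apply/eqP; lia.
  rewrite !(inE, mem_cat).
  case: (ltngtP i b1) => hib1.
  - case: (eqVneq i a2) => hia2; first by rewrite !orbT.
    by rewrite (@mem_det b1 a2 i) ?orbT //; apply/andP; split; lia.
  - by rewrite (@mem_up b1 N i) ?orbT //; apply/andP; split; lia.
  - by rewrite /= ?orbT.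
have [pR lR sR eR cR] := IH a3 b3 c erefl (ltac:(by case: hg2 => _ _ [])).
have [hA2 hab2 [h23 h32 hb23 hc2 hg3]] := hg2.

set r := R ((a3, b3) :: c) in pR lR sR eR cR *.
set e3 := endR ((a3, b3) :: c) in pR lR sR eR cR *.
have he3 : b2 <= e3.
  rewrite /e3; case: c hc2 {IH hg2 pR lR sR eR cR r e3 hg hg3} => [|[a4 b4] c'] /=.
    by move=> _; lia.
  done.
clearbody r e3.
have [p1 l1] := @det_path b1 a2 ltac:(apply/andP; split; lia).
have [p2 l2] := @up_path b1 a3 ltac:(apply/andP; split; lia).
have [p3 l3] := @down_path e3 b2 ltac:(apply/andP; split; lia).
have [p4 l4] := @det_path b2 a3 ltac:(apply/andP; split; lia).
rewrite /= hA1 !(cat_path, last_cat) p1 l1 p2 l2 pR lR p3 l3 p4 l4 /= Asym hA2.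
rewrite !size_cat size_det size_up size_down size_det /=.
have hsig : sig ((a1, b1) :: (a2, b2) :: (a3, b3) :: c) =
   b1 - a1.+1 + (b2 - a2.+1 + sig ((a3, b3) :: c)) by [].
rewrite /= in sR.
split => //; try lia.
move=> i /andP[h1 h2] /orP[h|h].
  by rewrite inE; apply/orP; left; apply/eqP; lia.
rewrite !(inE, mem_cat).
case: (ltngtP i b1) => hib1.
- case: (eqVneq i a2) => hia2; first by rewrite !orbT.
  by rewrite (@mem_det b1 a2 i) ?orbT //; apply/andP; split; lia.
- case: (leqP i a3) => hia3.
    by rewrite (@mem_up b1 a3 i) ?orbT //; apply/andP; split; lia.
  case: (leqP e3 i) => hie.
    have := cR i (ltac:(apply/andP; split; lia)) (ltac:(by rewrite hie orbT)).
    rewrite inE; case/orP => [/eqP ?|->]; first lia.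
    by rewrite !orbT.
  case: (leqP b2 i) => hib2.
    by rewrite (@mem_down e3 b2 i) ?orbT //; apply/andP; split; lia.
  by rewrite (@mem_det b2 a3 i) ?orbT //; apply/andP; split; lia.
- by rewrite /= ?orbT.
Qed.



Lemma build
  (maxc : forall b, 0 < b < N -> exists a v, [/\ a < b, b < v, v <= N, A a v &
     forall u' v', u' < b -> b < v' -> v' <= N -> A u' v' -> v' <= v]) :
  forall k pb a b, N - b <= k -> 0 < pb -> a < pb -> pb < b -> b <= N -> A a b ->
  (forall u v, u < pb -> pb < v -> v <= N -> A u v -> v <= b) ->
  exists c', good ((a, b) :: c') /\ (forall a2 b2 c'', c' = (a2, b2) :: c'' -> pb <= a2).
Proof.
elim=> [|k IH] pb a b hk h0 hapb hpbb hbN hA hmax.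
  exists [::]; split => //; split => //; lia.
case: (eqVneq b N) => hbe.
  exists [::]; split => //; split => //; lia.
have [a2 [v2 [h1 h2 h3 h4 h5]]] := maxc b ltac:(apply/andP; split; lia).
have [c'' [hg hc]] := IH b a2 v2 ltac:(lia) ltac:(lia) h1 h2 h3 h4 h5.
have hpa2 : pb <= a2.
  rewrite leqNgt; apply/negP => hlt; have := hmax a2 v2 hlt ltac:(lia) h3 h4; lia.
exists ((a2, v2) :: c''); split; last by move=> ? ? ? [<- _ _].
split; [exact: hA | lia | ].
split; [lia | lia | lia | | exact: hg].
by case: c'' hg hc => [|[a3 b3] c3] // hg hc; exact: hc a3 b3 c3 erefl.
Qed.

End Walks.

Lemma path_cross (T' : Type) (r : rel T') (h : T' -> nat) b x q :
  path r x q -> h x < b -> b < h (last x q) -> (forall y z, r y z -> h z != b) ->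
  exists y z, [/\ r y z, h y < b & b < h z].
Proof.
elim: q x => [|z q IH] x /=; first by move=> _ h1 h2; lia.
move=> /andP[hxz hp] hx hl hne.
case: (ltnP (h z) b) => hz; first exact: (IH z hp hz hl hne).
exists x, z; split => //; move/eqP: (hne _ _ hxz) => ?; lia.
Qed.

Theorem theorem2 (T : finType) (e : rel T) :
  simple_graph e -> two_vertex_connected e ->
  (exists s : seq T, hamiltonian_path e s) ->
  exists (x : T) (p : seq T), tsp_tour e x p /\ 3 * tour_length x p <= 4 * #|T|.
Proof.
move=> [esym _] [n3 [_ cut]] [s [srt unq alls]].
have cardT : #|T| = size s.
  rewrite -(card_uniqP unq); apply: eq_card => x; by rewrite alls.
case: s srt unq alls cardT => [|x0 p] srt unq alls cardT.
  by rewrite cardT in n3.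
set s := x0 :: p in unq alls cardT.
set N := size p.
set f := nth x0 s.
pose A := relpre f e.
have Asym : symmetric A by move=> i j; rewrite /A /= esym.
have Aup : forall i, i < N -> A i i.+1.
  by move=> i hi; rewrite /A /=; have := (pathP x0 srt) i hi.
have N2 : 2 <= N by rewrite cardT in n3.
have hidx : forall i, i <= N -> index (f i) s = i.
  by move=> i hi; apply: index_uniq.
have hfi : forall v, f (index v s) = v by move=> v; apply: nth_index.
have hiN : forall v, index v s <= N.
  by move=> v; have := index_mem v s; rewrite alls.
have cross : forall b, 0 < b < N -> exists u v, [/\ u < b, b < v, v <= N & A u v].
  move=> b /andP[hb0 hbN].
  have hne : forall i, i <= N -> i != b -> f i != f b.
    by move=> i hi hib; rewrite nth_uniq //; rewrite /=; lia.
  have := cut (f b) (f 0) (f N) (hne 0 ltac:(lia) ltac:(lia)) (hne N ltac:(lia) ltac:(lia)).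
  move/connectP => [q hq hl].
  have [y [z [hyz hy hz]]] : exists y z,
      [/\ del_vertex e (f b) y z, index y s < b & b < index z s].
    apply: (@path_cross T _ (fun v => index v s) b (f 0) q hq).
    - by rewrite hidx //; lia.
    - by rewrite -hl hidx.
    - move=> y z /and3P[_ _ hz]; apply: contra hz => /eqP <-; by rewrite hfi.
  exists (index y s), (index z s); split => //.
  by move/and3P: hyz => [hyz _ _]; rewrite /A /= !hfi.
have maxc : forall b, 0 < b < N -> exists a v, [/\ a < b, b < v, v <= N, A a v &
     forall u' v', u' < b -> b < v' -> v' <= N -> A u' v' -> v' <= v].
  move=> b hb.
  pose P v := [&& b < v, v <= N & has (fun u => A u v) (iota 0 b)].
  have exP : exists v, P v.
    have [u [v [h1 h2 h3 h4]]] := cross b hb.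
    exists v; rewrite /P h2 h3 /=; apply/hasP; exists u => //.
    by rewrite mem_iota add0n leq0n.
  have ubP : forall v, P v -> v <= N by move=> v /and3P[].
  case: (ex_maxnP exP ubP) => v /and3P[h1 h2 /hasP[a ha hA]] hmax.
  exists a, v; split => //.
  - by move: ha; rewrite mem_iota add0n leq0n.
  - move=> u' v' h1' h2' h3' hA'; apply: hmax; rewrite /P h2' h3' /=.
    by apply/hasP; exists u' => //; rewrite mem_iota add0n leq0n.
have [a0 [b0 [ha0 hb0 hb0N hA0 hmax0]]] := maxc 1 ltac:(apply/andP; split; lia).
have a00 : a0 = 0 by lia.
subst a0.
have [c' [hg _]] := @build N A maxc (N - b0) 1 0 b0 (leqnn _) ltac:(lia) ha0 hb0 hb0N hA0 hmax0.
set c := (0, b0) :: c' in hg.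
have tour : forall P, path A 0 P -> last 0 P = 0 -> (forall i, i <= N -> i \in 0 :: P) ->
   tsp_tour e (f 0) (map f P).
  move=> P hp hl hc; split.
  - by rewrite path_map.
  - by rewrite last_map hl.
  - move=> v; rewrite -(hfi v).
    by have := map_f f (hc _ (hiN v)).
have Wtour : forall u, inv N u 0 c -> tsp_tour e (f 0) (map f (W N u 0 c ++ down N 0))
     /\ size (W N u 0 c ++ down N 0) + sw u c = 2 * N.
  move=> u hi.
  have [pW lW sW] := @W_ok N A Aup u 0 c (or_intror hg) hi.
  have [pD lD] := @down_path N A Asym Aup N 0 ltac:(apply/andP; split; lia).
  split; last by rewrite size_cat size_down; lia.
  apply: tour.
  - by rewrite cat_path pW lW pD.
  - by rewrite last_cat lW lD.
  - move=> i hi'; rewrite -cat_cons mem_cat.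
    case: (ltnP i N) => hiN'.
      by rewrite mem_down ?orbT //; apply/andP; split; lia.
    have -> : i = N by lia.
    by rewrite -{1}lW mem_last.
have [T1 S1] := Wtour true (leqnn 0).
have [T2 S2] := Wtour false (ltac:(by rewrite /c /=; case: (c') => [|[? ?] ?])).
have [pR lR sR eR cR] := @R_ok N A Asym Aup c 0 b0 c' erefl hg.
have [pD lD] := @down_path N A Asym Aup (endR c) 0 ltac:(apply/andP; split; lia).
have T3 : tsp_tour e (f 0) (map f (R c ++ down (endR c) 0)).
  apply: tour.
  - by rewrite cat_path pR lR pD.
  - by rewrite last_cat lR lD.
  - move=> i hi'; rewrite -cat_cons mem_cat.
    case: (ltnP i (endR c)) => hie.
      by rewrite mem_down ?orbT //; apply/andP; split; lia.
    have -> // := cR i ltac:(apply/andP; split; lia) ltac:(by rewrite hie orbT).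
have S3 : size (R c ++ down (endR c) 0) = sig c + 2.
  by rewrite size_cat size_down; lia.
have hsig := sw_sig c.
rewrite cardT /= -/N.
case: (leqP (3 * size (W N true 0 c ++ down N 0)) (4 * N.+1)) => h1.
  by exists (f 0), (map f (W N true 0 c ++ down N 0)); split => //; rewrite /tour_length size_map.
case: (leqP (3 * size (W N false 0 c ++ down N 0)) (4 * N.+1)) => h2.
  by exists (f 0), (map f (W N false 0 c ++ down N 0)); split => //; rewrite /tour_length size_map.
exists (f 0), (map f (R c ++ down (endR c) 0)); split => //; rewrite /tour_length size_map.
lia.
Qed.
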